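(* Assume the Eliahou–Kryuchkov conjecture: for any two plane trees all of whose internal vertices are trivalent and which have the same number of twigs, there exist assignments of signs $\pm$ to the internal vertices of the two trees such that one signed tree can be transformed into the other by a finite sequence of signed reassociation moves. Then for any two bracketings $L$ and $R$ of the product of the same ordered sequence of $n$ variables $x_1,\dots,x_n$, there exists an assignment of values from $\{i,j,k\}$ to the variables such that $L=R$ in the vector cross product algebra (with both sides nonzero), together with a sequence of algebraic reassociations $(ab)c\leftrightarrow a(bc)$ applied to subexpressions taking $L$ to $R$ such that every intermediate bracketed product in the sequence is non-zero when evaluated as a vector cross product.
   Context: The vector cross product algebra is the algebra on $\mathbb{R}^3$ with basis $i,j,k$ and product the cross product: $ij=k$, $jk=i$, $ki=j$, $ji=-k$, $kj=-i$, $ik=-j$, $ii=jj=kk=0$. A bracketed product of $n$ ordered variables corresponds to a rooted binary plane tree with $n$ leaves (each trivalent vertex is a product of its two incoming edge labels). A twig is an edge incident to an end vertex of a tree. A reassociation move replaces a configuration of two adjacent trivalent vertices corresponding to $(ab)c$ by the one corresponding to $a(bc)$, or conversely. A signed reassociation move is allowed only when the two adjacent vertices involved carry the same sign, and after the move both vertices receive the opposite sign. *)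

(* Defs.v *)
From Stdlib Require Import Reals Relations.
Open Scope R_scope.

Definition vec : Type := (R * R * R)%type.

Definition cross (a b : vec) : vec :=
  let '(a1, a2, a3) := a in
  let '(b1, b2, b3) := b in
  (a2 * b3 - a3 * b2, a3 * b1 - a1 * b3, a1 * b2 - a2 * b1).

Definition vzero : vec := (0, 0, 0).

Inductive basis : Type := bi | bj | bk.

Definition bvec (e : basis) : vec :=
  match e with
  | bi => (1, 0, 0)
  | bj => (0, 1, 0)
  | bk => (0, 0, 1)
  end.

(** Rooted binary plane trees = bracketings (leaves are the variables). *)
Inductive tree : Type :=
| Leaf : tree
| Node : tree -> tree -> tree.

Fixpoint leaves (t : tree) : nat :=
  match t with
  | Leaf => 1
  | Node l r => (leaves l + leaves r)%nat
  end.

Fixpoint eval_from (t : tree) (k : nat) (f : nat -> basis) : vec :=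
  match t with
  | Leaf => bvec (f k)
  | Node l r => cross (eval_from l k f) (eval_from r (k + leaves l)%nat f)
  end.

(** Variables are x_0, ..., x_(n-1) (i.e. x_1..x_n shifted). *)
Definition eval (t : tree) (f : nat -> basis) : vec := eval_from t 0 f.

Inductive reassoc : tree -> tree -> Prop :=
| RA_lr a b c : reassoc (Node (Node a b) c) (Node a (Node b c))
| RA_rl a b c : reassoc (Node a (Node b c)) (Node (Node a b) c)
| RA_left l l' r : reassoc l l' -> reassoc (Node l r) (Node l' r)
| RA_right l r r' : reassoc r r' -> reassoc (Node l r) (Node l r').

Inductive nonzero_path (f : nat -> basis) : tree -> tree -> Prop :=
| NZ_refl t : eval t f <> vzero -> nonzero_path f t t
| NZ_step t u v : reassoc t u -> eval t f <> vzero ->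
    nonzero_path f u v -> nonzero_path f t v.

(** Signed trees: each internal (trivalent) vertex carries a sign
    (true = +, false = -). *)
Inductive stree : Type :=
| SLeaf : stree
| SNode : bool -> stree -> stree -> stree.

Fixpoint erase (s : stree) : tree :=
  match s with
  | SLeaf => Leaf
  | SNode _ l r => Node (erase l) (erase r)
  end.

Inductive sreassoc : stree -> stree -> Prop :=
| SRA_lr s a b c :
    sreassoc (SNode s (SNode s a b) c) (SNode (negb s) a (SNode (negb s) b c))
| SRA_rl s a b c :
    sreassoc (SNode s a (SNode s b c)) (SNode (negb s) (SNode (negb s) a b) c)
| SRA_left s l l' r : sreassoc l l' -> sreassoc (SNode s l r) (SNode s l' r)
| SRA_right s l r r' : sreassoc r r' -> sreassoc (SNode s l r) (SNode s l r').

(** Eliahou--Kryuchkov conjecture (rooted form: a plane trivalent tree with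
    n+1 twigs, rooted at a twig, is a rooted binary plane tree with n leaves;
    reassociation moves at internal edges are exactly the moves above). *)
Definition EK_conjecture : Prop :=
  forall t1 t2 : tree, leaves t1 = leaves t2 ->
    exists s1 s2 : stree,
      erase s1 = t1 /\ erase s2 = t2 /\ clos_refl_trans stree sreassoc s1 s2.

(* Main.v *)
Require Import Defs.
From Stdlib Require Import Reals Relations Lra List Arith Lia Bool.
Import ListNotations.
Open Scope R_scope.

Definition children (s : bool) (z : basis) : basis * basis :=
  match z, s with
  | bk, true => (bi, bj) | bk, false => (bj, bi)
  | bi, true => (bj, bk) | bi, false => (bk, bj)
  | bj, true => (bk, bi) | bj, false => (bi, bk)
  end.

Fixpoint colors (t : stree) (z : basis) : list basis :=
  match t with
  | SLeaf => [z]
  | SNode s l r => colors l (fst (children s z)) ++ colors r (snd (children s z))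
  end.

Fixpoint sgn (t : stree) : bool :=
  match t with
  | SLeaf => true
  | SNode b l r => eqb b (eqb (sgn l) (sgn r))
  end.

Definition vneg (a : vec) : vec := let '(a1, a2, a3) := a in (-a1, -a2, -a3).
Definition sv (p : bool) (v : vec) : vec := if p then v else vneg v.

Lemma cross_sv b z p q :
  cross (sv p (bvec (fst (children b z)))) (sv q (bvec (snd (children b z))))
  = sv (eqb b (eqb p q)) (bvec z).
Proof.
  destruct b, z, p, q; cbv -[Rmult Rminus Ropp]; f_equal; try f_equal; ring.
Qed.

Lemma colors_len t z : length (colors t z) = leaves (erase t).
Proof.
  revert z; induction t; intros z; simpl; auto.
  rewrite length_app, IHt1, IHt2; auto.
Qed.

Definition matchf (f : nat -> basis) (k : nat) (l : list basis) :=
  forall i, (i < length l)%nat -> f (k + i)%nat = nth i l bi.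

Lemma eval_col t : forall z k f, matchf f k (colors t z) ->
  eval_from (erase t) k f = sv (sgn t) (bvec z).
Proof.
  induction t; intros z k f H; simpl.
  - specialize (H 0%nat ltac:(simpl; lia)). rewrite Nat.add_0_r in H.
    simpl in H. rewrite H. reflexivity.
  - simpl in H. rewrite (IHt1 (fst (children b z))), (IHt2 (snd (children b z))).
    + apply cross_sv.
    + intros i Hi. rewrite <- Nat.add_assoc.
      rewrite <- (colors_len t1 (fst (children b z))).
      rewrite H by (rewrite length_app; lia).
      rewrite app_nth2 by lia. f_equal; lia.
    + intros i Hi. rewrite H by (rewrite length_app; lia).
      apply app_nth1; auto.
Qed.

Lemma sre_props s t : sreassoc s t ->
  reassoc (erase s) (erase t) /\ sgn s = sgn t /\ forall z, colors s z = colors t z.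
Proof.
  induction 1; simpl.
  - split; [constructor|]. split.
    + destruct s, (sgn a), (sgn b), (sgn c); reflexivity.
    + intros z; destruct s, z; simpl; rewrite app_assoc; reflexivity.
  - split; [constructor|]. split.
    + destruct s, (sgn a), (sgn b), (sgn c); reflexivity.
    + intros z; destruct s, z; simpl; rewrite app_assoc; reflexivity.
  - destruct IHsreassoc as [A [B C]]. split; [constructor; auto|].
    split; [rewrite B; auto|]. intros z; rewrite C; auto.
  - destruct IHsreassoc as [A [B C]]. split; [constructor; auto|].
    split; [rewrite B; auto|]. intros z; rewrite C; auto.
Qed.

Lemma sv_nz p : sv p (bvec bk) <> vzero.
Proof. destruct p; cbv -[Ropp]; intros H; injection H; intros; lra. Qed.

Theorem mainTheorem4 :
  EK_conjecture ->
  forall tL tR : tree, leaves tL = leaves tR ->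
    exists f : nat -> basis,
      eval tL f = eval tR f /\ eval tL f <> vzero /\ nonzero_path f tL tR.
Proof.
  intros EK tL tR Hl.
  destruct (EK tL tR Hl) as [s1 [s2 [E1 [E2 Hp]]]].
  set (C := colors s1 bk).
  exists (fun m => nth m C bi).
  assert (Hev : forall s, colors s bk = C -> sgn s = sgn s1 ->
            eval (erase s) (fun m => nth m C bi) = sv (sgn s1) (bvec bk)).
  { intros s HC HS. unfold eval. rewrite <- HS. apply eval_col.
    intros i _. rewrite HC. reflexivity. }
  apply clos_rt_rt1n in Hp.
  assert (Gen : forall s, clos_refl_trans_1n stree sreassoc s s2 ->
            colors s bk = C -> sgn s = sgn s1 ->
            colors s2 bk = C /\ sgn s2 = sgn s1 /\
            nonzero_path (fun m => nth m C bi) (erase s) (erase s2)).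
  { intros s H. clear E2 Hp. induction H as [x|x y w Hxy Hyw IH]; intros HC HS.
    - split; auto. split; auto. constructor. rewrite Hev; auto. apply sv_nz.
    - destruct (sre_props _ _ Hxy) as [A [B D]].
      assert (HC' : colors y bk = C) by (rewrite <- (D bk); exact HC).
      assert (HS' : sgn y = sgn s1) by congruence.
      destruct (IH HC' HS') as [I1 [I2 I3]].
      split; auto. split; auto. eapply NZ_step; eauto.
      rewrite Hev; auto. apply sv_nz. }
  destruct (Gen s1 Hp eq_refl eq_refl) as [G1 [G2 G3]].
  subst tL tR. split; [|split].
  - rewrite !Hev; auto.
  - rewrite Hev; auto. apply sv_nz.
  - exact G3.
Qed.
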